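(* Let $\mathbf{K}$ be a finite field of characteristic $p>3$, let $(\alpha,\beta)\in\mathbf{K}^2$, let $G\in\mathbf{K}[[x]]$ be a formal power series and $H\in\mathbf{K}[z]$ a polynomial such that $H(\alpha)=1$ and $\beta^2=G(0)\neq 0$. Let $\mu\in\{1,\dots,p\}$. Then the following algorithm, on input $(\mu,(\alpha,\beta),H,G)$, returns the Taylor series modulo $x^\mu$ of the solution $S$ of the differential equation $$S'(x)^2=G(x)\,H(S(x)),\qquad S(0)=\alpha,\qquad S'(0)=\beta.$$ Algorithm: set $d\leftarrow 2$, $U\leftarrow 1/\beta$, $J\leftarrow 1$, $V\leftarrow 1$, and $S\leftarrow \alpha+\beta x+\big[(G'(0)+H'(\alpha)\beta^3)/(4\beta)\big]x^2$. While $d<\mu-1$, perform in order: $U\leftarrow U\cdot(2-S'\cdot U)\bmod x^d$; $V\leftarrow \big(V+J\cdot(H\circ S)\cdot(2-V\cdot J)\big)/2\bmod x^d$; $J\leftarrow J\cdot(2-V\cdot J)\bmod x^d$; $S\leftarrow S+V\cdot\int\big(G\cdot(H\circ S)-S'^2\big)\,\big(U\cdot J/2\big)\,dx\bmod x^{\min(2d+1,\mu)}$; $d\leftarrow 2d$. Finally return $S$.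
   Context: Here $'$ denotes the formal derivative with respect to $x$ (for $H$, with respect to $z$), $H\circ S$ is the composition $H(S(x))$, and $\int F\,dx$ denotes the formal antiderivative with zero constant term, $\int\sum_i c_i x^i\,dx=\sum_i \frac{c_i}{i+1}x^{i+1}$. All operations are on truncated power series over $\mathbf{K}$. *)

(* Defs.v *)
From mathcomp Require Import all_boot all_order all_algebra.
Set Implicit Arguments. Unset Strict Implicit. Unset Printing Implicit Defensive.
Import Order.TTheory GRing.Theory Num.Theory.
Local Open Scope ring_scope.

Section Newton.
Variable K : fieldType.

(* A formal power series in K[[x]] is represented by its coefficient function. *)
Definition series := nat -> K.

Definition trunc_series (n : nat) (F : series) : {poly K} := \poly_(i < n) F i.

Definition pint (F : {poly K}) : {poly K} :=
  \poly_(i < (size F).+1) (if i is j.+1 then F`_j / j.+1%:R else 0).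

(* S is a solution modulo x^mu of S'^2 = G * H(S), S(0)=alpha, S'(0)=beta :
   the equation holds modulo x^(mu-1) (all that S mod x^mu can determine). *)
Definition is_solution_mod (mu : nat) (alpha beta : K) (H : {poly K})
    (G S : series) : Prop :=
  [/\ S 0%N = alpha, S 1%N = beta &
      take_poly (mu.-1)
        ((trunc_series mu S)^`() ^+ 2
         - trunc_series mu G * (H \Po trunc_series mu S)) = 0].

Record nstate := NState { st_d : nat; st_U : {poly K}; st_J : {poly K};
                          st_V : {poly K}; st_S : {poly K} }.

Section Algo.
Variables (mu : nat) (alpha beta : K) (H : {poly K}) (G : series).

Let Gm := trunc_series mu G.

Definition nstep (st : nstate) : nstate :=
  let: NState d U J V S0 := st in
  let U' := take_poly d (U * (2 - S0^`() * U)) in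
  let V' := take_poly d ((2^-1 : K) *: (V + J * (H \Po S0) * (2 - V * J))) in
  let J' := take_poly d (J * (2 - V' * J)) in
  let S' := take_poly (minn (2 * d).+1 mu)
              (S0 + V' * pint ((Gm * (H \Po S0) - S0^`() ^+ 2)
                              * ((2^-1 : K) *: (U' * J')))) in
  NState (2 * d) U' J' V' S'.

(* while d < mu - 1 do body; fuel mu is more than enough since d doubles. *)
Fixpoint nloop (fuel : nat) (st : nstate) : nstate :=
  if fuel is n.+1 then
    if (st_d st < mu.-1)%N then nloop n (nstep st) else st
  else st.

Definition ninit : nstate :=
  NState 2 (beta^-1)%:P 1 1
    (alpha%:P + beta *: 'X
     + ((G 1%N + (H^`()).[alpha] * beta ^+ 3) / (4 * beta)) *: 'X^2).

Definition newton_output : {poly K} := st_S (nloop mu ninit).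

End Algo.
End Newton.

(* Main.v *)
Require Import Defs.
From mathcomp Require Import all_boot all_order all_algebra.
From mathcomp Require Import ring.
Set Implicit Arguments. Unset Strict Implicit. Unset Printing Implicit Defensive.
Import GRing.Theory.
Local Open Scope ring_scope.

Section VZ.
Variable K : fieldType.
Implicit Types a b c : {poly K}.

Definition vz (n : nat) (a : {poly K}) := exists q, a = 'X^n * q.

Lemma vzP n a : vz n a <-> (forall i, (i < n)%N -> a`_i = 0).
Proof.
split.
  by move=> [q ->] i hi; rewrite coefXnM hi.
move=> h; exists (drop_poly n a).
have ht : take_poly n a = 0.
  by apply/polyP => i; rewrite coef_take_poly coef0; case: ifP => // /h.
by rewrite -{1}(poly_take_drop n a) ht add0r mulrC.
Qed.

Lemma vz_take n a : vz n a <-> take_poly n a = 0.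
Proof.
rewrite vzP; split.
  by move=> h; apply/polyP => i; rewrite coef_take_poly coef0; case: ifP => // /h.
by move=> h i hi; move/polyP: h => /(_ i); rewrite coef_take_poly hi coef0.
Qed.

Lemma vz_takeB n a : vz n (take_poly n a - a).
Proof. by apply/vzP => i hi; rewrite coefB coef_take_poly hi subrr. Qed.

Lemma vz0 n : vz n 0.
Proof. by exists 0; rewrite mulr0. Qed.

Lemma vzW m n a : (m <= n)%N -> vz n a -> vz m a.
Proof. by move=> hmn /vzP h; apply/vzP => i hi; apply: h; apply: leq_trans hmn. Qed.

Lemma vzD n a b : vz n a -> vz n b -> vz n (a + b).
Proof. by move=> [q ->] [r ->]; exists (q + r); rewrite mulrDr. Qed.

Lemma vzN n a : vz n a -> vz n (- a).
Proof. by move=> [q ->]; exists (- q); rewrite mulrN. Qed.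

Lemma vzB n a b : vz n a -> vz n b -> vz n (a - b).
Proof. by move=> ha hb; apply: vzD => //; apply: vzN. Qed.

Lemma vzMl n a b : vz n b -> vz n (a * b).
Proof. by move=> [q ->]; exists (a * q); rewrite mulrCA. Qed.

Lemma vzMr n a b : vz n a -> vz n (a * b).
Proof. by move=> h; rewrite mulrC; apply: vzMl. Qed.

Lemma vzM m n a b : vz m a -> vz n b -> vz (m + n) (a * b).
Proof. by move=> [q ->] [r ->]; exists (q * r); rewrite exprD; ring. Qed.

Lemma vzX n a : vz n a -> vz (n + n) (a ^+ 2).
Proof. by move=> h; rewrite expr2; apply: vzM. Qed.

Lemma vzZ n (k : K) a : vz n a -> vz n (k *: a).
Proof. by move=> h; rewrite -mul_polyC; apply: vzMl. Qed.

Lemma vz_deriv n a : vz n.+1 a -> vz n a^`().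
Proof. by move/vzP=> h; apply/vzP => i hi; rewrite coef_deriv h ?mul0rn. Qed.

Lemma vzXn n : vz n ('X^n).
Proof. by exists 1; rewrite mulr1. Qed.

Lemma taylor (P b a : {poly K}) :
  exists R, P \Po (b + a) = P \Po b + (P^`() \Po b) * a + a ^+ 2 * R.
Proof.
elim/poly_ind: P => [|Q c [R IH]].
  by exists 0; rewrite !comp_poly0 deriv0 comp_poly0; ring.
exists ((Q^`() \Po b) + R * (b + a)).
rewrite derivMXaddC !comp_polyD !comp_polyM !comp_polyX !comp_polyC IH.
ring.
Qed.

Lemma vz_comp n (P x y : {poly K}) : vz n (x - y) -> vz n ((P \Po x) - (P \Po y)).
Proof.
move=> h; have [R] := taylor P y (x - y).
rewrite [y + _]addrC subrK => ->.
have e3 : forall u v w : {poly K}, u + v + w - u = v + w by move=> u v w; ring.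
rewrite e3; apply: vzD; first by apply: vzMl.
by rewrite expr2 -mulrA; apply: vzMr.
Qed.

End VZ.

Section Pint.
Variables (K : fieldType) (p : nat).
Hypothesis hp : p \in [pchar K].

Lemma coef_pint (F : {poly K}) i :
  (pint F)`_i = if i is j.+1 then F`_j / j.+1%:R else 0.
Proof.
rewrite /pint coef_poly; case: i => [|j] /=; first by rewrite ?if_same.
case: ifP => // h; rewrite nth_default ?mul0r //.
by move: h; rewrite ltnS => /negbT; rewrite -leqNgt.
Qed.

Lemma vz_pint n (F : {poly K}) : vz n F -> vz n.+1 (pint F).
Proof.
move/vzP=> h; apply/vzP => -[|i] hi; rewrite coef_pint //.
by rewrite h ?mul0r.
Qed.

Lemma natr_neq0 k : (0 < k)%N -> (k < p)%N -> k%:R != 0 :> K.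
Proof.
move=> k0 kp; rewrite -(dvdn_pcharf hp); apply/negP => /dvdn_leq.
by move=> /(_ k0); rewrite leqNgt kp.
Qed.

Lemma pint_deriv (F : {poly K}) : vz p.-1 ((pint F)^`() - F).
Proof.
apply/vzP => i hi; rewrite coefB coef_deriv (coef_pint F) -[_ *+ i.+1]mulr_natr divfK ?subrr //.
apply: natr_neq0 => //; move: hi; case: (p) => //= q; by rewrite ltnS.
Qed.

End Pint.

From mathcomp Require Import zify.

Lemma key_id (K : fieldType) (Gm W Hd R S1 Vp Vpd P Pd U J C : {poly K}) :
  Gm * (W + Hd * (Vp * P) + (Vp * P) ^+ 2 * R) - (S1 + (Vpd * P + Vp * Pd)) ^+ 2 =
  (Gm * W - S1 ^+ 2) * (1 - (U * S1) * (Vp * J)) + (Gm * Hd * Vp - 2 * S1 * Vpd) * P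
  - 2 * S1 * Vp * (Pd - (Gm * W - S1 ^+ 2) * (C * (U * J)))
  - (Vpd * P + Vp * Pd) ^+ 2 + Gm * (Vp * P) ^+ 2 * R
  - (2 * C - 1) * ((Gm * W - S1 ^+ 2) * U * S1 * Vp * J).
Proof. ring. Qed.

Section Main.
Variables (K : fieldType) (p mu : nat) (alpha beta : K) (G : series K) (H : {poly K}).
Hypotheses (hp : p \in [pchar K]) (p3 : (3 < p)%N) (Ha : H.[alpha] = 1)
  (hb : beta ^+ 2 = G 0%N) (hG0 : G 0%N != 0) (hmu1 : (1 <= mu)%N) (hmup : (mu <= p)%N).

Notation Gm := (trunc_series mu G).
Definition EE (Sx : {poly K}) := Gm * (H \Po Sx) - Sx^`() ^+ 2.

Definition INV (st : nstate K) :=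
  let: NState d U J V Sx := st in
  [/\ (2 <= d)%N,
      exists h, [/\ (h <= d)%N, (d <= h + h)%N, vz h (U * Sx^`() - 1),
                    vz h (V ^+ 2 - (H \Po Sx)) & vz h (V * J - 1)],
      vz (minn d mu.-1) (EE Sx) &
      vz 2 (Sx - (alpha%:P + beta *: 'X))].

Lemma two_neq0 : (2 : K) != 0.
Proof. by apply: (natr_neq0 hp) => //; apply: leq_trans p3. Qed.

Lemma step_ok st : INV st -> (st_d st < mu.-1)%N -> INV (nstep mu H G st).
Proof.
case: st => d U J V Sx /= [d2 [h [hd dh eU eV eJ]] eE eS] dmu.
rewrite /nstep.
set U' := take_poly d (U * _).
set V' := take_poly d (_ *: _).
set J' := take_poly d (J * _).
set P := pint _.
set Sx' := take_poly _ _.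
set c : K := 2^-1.
set C : {poly K} := c%:P.
have hC : 2 * C = 1.
  by rewrite /C /c -polyC_natr -polyCM divff ?two_neq0.
have hC0 : 2 * C - 1 = 0 by rewrite hC subrr.
set W := H \Po Sx.
set S1 := Sx^`().
set E0 := Gm * W - S1 ^+ 2.
have eE0 : vz d E0.
  by move: eE; rewrite /EE -/W -/S1 -/E0; have -> : minn d mu.-1 = d by lia.
have tU : vz d (U' - U * (2 - S1 * U)) by apply: vz_takeB.
have tV : vz d (V' - C * (V + J * W * (2 - V * J))) by rewrite /C mul_polyC; apply: vz_takeB.
have tJ : vz d (J' - J * (2 - V' * J)) by apply: vz_takeB.
set m := minn (2 * d).+1 mu.
set k := minn (2 * d) mu.-1.
have mk : m = k.+1 by rewrite /m /k; lia.
have tS : vz m (Sx' - (Sx + V' * P)) by apply: vz_takeB.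
have u1 : vz d (U' * S1 - 1).
  have -> : U' * S1 - 1 = (U' - U * (2 - S1 * U)) * S1 - (U * S1 - 1) ^+ 2 by ring.
  by apply: vzB; [apply: vzMr | apply: vzW dh _; apply: vzX].
set J2 := J * (2 - V * J).
have v0 : vz d (V * J2 - 1).
  have -> : V * J2 - 1 = - (V * J - 1) ^+ 2 by rewrite /J2; ring.
  by apply: vzN; apply: vzW dh _; apply: vzX.
have v1 : vz h (V' - V).
  have -> : V' - V = (V' - C * (V + J * W * (2 - V * J)))
     + C * (J2 * (W - V ^+ 2) + V * (V * J2 - 1)) + (2 * C - 1) * V by rewrite /J2; ring.
  rewrite hC0 mul0r addr0; apply: vzD; first exact: vzW hd tV.
  apply: vzMl; apply: vzD; last by apply: vzMl; apply: vzW hd v0.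
  by apply: vzMl; rewrite -opprB; apply: vzN.
have v2 : vz d (V' ^+ 2 - W).
  set A := C * (V + J * W * (2 - V * J)).
  have eD : vz (h + h) ((V - W * J2) ^+ 2).
    apply: vzX; have -> : V - W * J2 = J2 * (V ^+ 2 - W) - V * (V * J2 - 1) by ring.
    by apply: vzB; [apply: vzMl | apply: vzMl; apply: vzW hd v0].
  have -> : V' ^+ 2 - W = (V' - A) * (V' + A) + C ^+ 2 * (V - W * J2) ^+ 2
     + W * (V * J2 - 1) + (2 * C - 1) * (2 * C + 1) * (V * W * J2) by rewrite /A /J2; ring.
  rewrite hC0 !mul0r addr0; apply: vzD; last by apply: vzMl.
  by apply: vzD; [apply: vzMr | apply: vzMl; apply: vzW dh eD].
have j1 : vz h (V' * J - 1).
  have -> : V' * J - 1 = (V' - V) * J + (V * J - 1) by ring.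
  by apply: vzD => //; apply: vzMr.
have j2 : vz d (V' * J' - 1).
  have -> : V' * J' - 1 = V' * (J' - J * (2 - V' * J)) - (V' * J - 1) ^+ 2 by ring.
  by apply: vzB; [apply: vzMl | apply: vzW dh _; apply: vzX].
set F := E0 * (C * (U' * J')).
have hPF : P = pint F by rewrite /P /F /C mul_polyC.
have eP : vz d.+1 P by rewrite hPF; apply: vz_pint; rewrite /F; apply: vzMr.
have eDl : vz d.+1 (V' * P) by apply: vzMl.
have s1 : vz d.+1 (Sx' - Sx).
  have -> : Sx' - Sx = (Sx' - (Sx + V' * P)) + V' * P by ring.
  by apply: vzD => //; apply: vzW tS; rewrite mk /k; lia.
have dS : vz d (Sx'^`() - S1) by rewrite -derivB; apply: vz_deriv.
have hW' : vz d.+1 ((H \Po Sx') - W) by apply: vz_comp.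
split.
- lia.
- exists d; split => //; try lia.
  + have -> : U' * Sx'^`() - 1 = U' * (Sx'^`() - S1) + (U' * S1 - 1) by ring.
    by apply: vzD => //; apply: vzMl.
  + have -> : V' ^+ 2 - (H \Po Sx') = (V' ^+ 2 - W) - ((H \Po Sx') - W) by ring.
    by apply: vzB => //; apply: vzW hW'.
-
  have kd : (k <= 2 * d)%N by rewrite /k; lia.
  have kp : (k <= p.-1)%N by rewrite /k; lia.
  set D := Sx + V' * P.
  have hED : vz k (EE Sx' - EE D).
    have -> : EE Sx' - EE D = Gm * ((H \Po Sx') - (H \Po D))
       - (Sx'^`() - D^`()) * (Sx'^`() + D^`()) by rewrite /EE; ring.
    apply: vzB.
      by apply: vzMl; apply: vzW (vz_comp H _); last exact: tS; rewrite mk.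
    by apply: vzMr; rewrite -derivB; apply: vz_deriv; rewrite -mk.
  suff hD : vz k (EE D).
    have -> : EE Sx' = (EE Sx' - EE D) + EE D by ring.
    by apply: vzD.
  have [R hR] := taylor H Sx (V' * P).
  have X0 : vz d.-1 (2 * V' * V'^`() - (H^`() \Po Sx) * S1).
    have -> : 2 * V' * V'^`() - (H^`() \Po Sx) * S1 = (V' ^+ 2 - W)^`().
      by rewrite derivB /W deriv_comp expr2 derivM -/S1; ring.
    by apply: vz_deriv; rewrite prednK //; lia.
  set X := Gm * (H^`() \Po Sx) * V' - 2 * S1 * V'^`().
  have eX : vz d.-1 X.
    have eVX : vz d.-1 (V' * X).
      have -> : V' * X = Gm * (H^`() \Po Sx) * (V' ^+ 2 - W) + (H^`() \Po Sx) * E0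
          - S1 * (2 * V' * V'^`() - (H^`() \Po Sx) * S1) by rewrite /X /E0; ring.
      apply: vzB => //; last by apply: vzMl.
      by apply: vzD; [apply: vzMl; apply: vzW v2; lia | apply: vzMl; apply: vzW eE0; lia].
    have -> : X = J' * (V' * X) - (V' * J' - 1) * X by ring.
    by apply: vzB; [apply: vzMl | apply: vzMr; apply: vzW j2; lia].
  rewrite /EE /D hR derivD derivM -/W -/S1.
  rewrite (key_id Gm W (H^`() \Po Sx) R S1 V' V'^`() P P^`() U' J' C) hC0 mul0r subr0.
  have edl : vz d (V'^`() * P + V' * P^`()) by rewrite -derivM; apply: vz_deriv.
  apply: vzD; last by apply: vzMr; apply: vzMl; apply: vzW (vzX eDl); lia.
  apply: vzB; last by apply: vzW (vzX edl); lia.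
  apply: vzB; last first.
    apply: vzMl; apply: vzW kp _; rewrite hPF; exact: pint_deriv.
  apply: vzD.
    have e1 : vz d (1 - U' * S1 * (V' * J')).
      have -> : 1 - U' * S1 * (V' * J') = - (U' * S1 - 1) - U' * S1 * (V' * J' - 1) by ring.
      by apply: vzB; [apply: vzN | apply: vzMl].
    apply: vzW (vzM eE0 e1); lia.
  apply: vzW (vzM eX eP); lia.
- have -> : Sx' - (alpha%:P + beta *: 'X) = (Sx' - Sx) + (Sx - (alpha%:P + beta *: 'X)) by ring.
  by apply: vzD => //; apply: vzW s1; lia.
Qed.


Lemma loop_ok fuel st : INV st -> (mu.-1 <= st_d st + fuel)%N ->
  INV (nloop mu H G fuel st) /\ (mu.-1 <= st_d (nloop mu H G fuel st))%N.
Proof.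
elim: fuel st => [|n IH] st hI hf /=; first by rewrite addn0 in hf.
case: ifP => hg; last by split => //; rewrite leqNgt hg.
apply: IH; first exact: step_ok.
case: st hI hf hg => d U J V S0 [d2 _ _ _] /= hf hg.
lia.
Qed.

Lemma beta_neq0 : beta != 0.
Proof. by apply: contraNneq hG0 => hb0; rewrite -hb hb0 expr0n. Qed.

Lemma coef1M (a b : {poly K}) : (a * b)`_1 = a`_0 * b`_1 + a`_1 * b`_0.
Proof. by rewrite coefM big_ord_recr big_ord1. Qed.

Lemma addrKl' (x y : {poly K}) : x + y - x = y.
Proof. ring. Qed.

Lemma init_ok : INV (ninit alpha beta H G).
Proof.
rewrite /ninit /=.
set c := (_ / _ : K).
set a := beta *: 'X + c *: 'X^2.
have hS0 : alpha%:P + beta *: 'X + c *: 'X^2 = alpha%:P + a by rewrite /a addrA.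
rewrite hS0.
have a0 : a`_0 = 0 by rewrite /a coefD !coefZ coefX coefXn !mulr0 addr0.
have a1 : a`_1 = beta by rewrite /a coefD !coefZ coefX coefXn mulr1 mulr0 addr0.
have va : vz 1 a by apply/vzP => -[|] // _; rewrite a0.
have [R hR] := taylor H alpha%:P a.
rewrite !comp_polyCr Ha in hR.
set h1 := (H^`()).[alpha] in hR *.
have va2 : vz 2 (a ^+ 2 * R) by apply: vzMr; exact: (vzX va).
have T0 : (H \Po (alpha%:P + a))`_0 = 1.
  rewrite hR !coefD coefCM a0 mulr0 addr0 coefC /=.
  by move/vzP: va2 => ->; rewrite ?addr0.
have T1 : (H \Po (alpha%:P + a))`_1 = h1 * beta.
  rewrite hR !coefD coefCM a1 coefC /=.
  by move/vzP: va2 => ->; rewrite ?addr0 ?add0r.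
have D0 : (alpha%:P + a)^`()`_0 = beta by rewrite coef_deriv coefD coefC a1 add0r.
have D1 : (alpha%:P + a)^`()`_1 = c *+ 2.
  by rewrite coef_deriv coefD coefC /a coefD !coefZ coefX coefXn /= mulr0 mulr1 !add0r.
have b0 := beta_neq0.
split => //.
- exists 1%N; split => //.
  + apply/vzP => -[|] // _; rewrite coefB coef0M coefC D0 /= coef1 mulVf //.
    by rewrite subrr.
  + apply/vzP => -[|] // _; rewrite coefB T0 expr1n coef1 subrr //.
  + by rewrite mulr1 subrr; apply: vz0.
- apply/vzP => i hi.
  rewrite /EE coefB.
  case: i hi => [|[|j]] hi; last by exfalso; lia.
    rewrite coef0M T0 mulr1 expr2 coef0M D0 coef_poly hmu1 -hb.
    by rewrite expr2 subrr.
  have mu3 : (2 < mu)%N by move: hi; lia.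
  rewrite coef1M T0 T1 expr2 coef1M D0 D1 !coef_poly hmu1.
  rewrite (ltn_trans _ mu3) // -hb /c.
  have f4 : (4 : K) != 0.
    by rewrite -[4]/(2 * 2)%:R natrM mulf_neq0 ?two_neq0.
  rewrite -/h1 !mulr2n; field.
  by rewrite b0 f4.
- rewrite /a addrA addrKl'; apply: vzZ; exact: vzXn.
Qed.

Lemma uniq_sol (Sa Sb : series K) :
  is_solution_mod mu alpha beta H G Sa -> is_solution_mod mu alpha beta H G Sb ->
  trunc_series mu Sa = trunc_series mu Sb.
Proof.
move=> [a0 a1 /vz_take ea] [b0 b1 /vz_take eb].
set A := trunc_series mu Sa in ea *; set B := trunc_series mu Sb in eb *.
have cA i : A`_i = if (i < mu)%N then Sa i else 0 by rewrite coef_poly.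
have cB i : B`_i = if (i < mu)%N then Sb i else 0 by rewrite coef_poly.
have bn0 := beta_neq0.
suff hk : forall k, (k <= mu)%N -> vz k (A - B).
  apply/polyP => i; have /vzP := hk mu (leqnn mu).
  move=> /(_ i); rewrite coefB cA cB; case: ifP => [hi /(_ isT)|//].
  by move/subr0_eq.
elim=> [|k IH] hk; first by apply/vzP.
have IHk := IH (ltnW hk).
suff ck : (A - B)`_k = 0.
  apply/vzP => i; rewrite ltnS leq_eqVlt => /orP [/eqP -> //|hi].
  by move/vzP: IHk => ->.
case: k IH hk IHk => [|[|j]] IH hk IHk.
- by rewrite coefB cA cB hk a0 b0 subrr.
- by rewrite coefB cA cB hk a1 b1 subrr.
- case: IHk => q hq.
  rewrite hq coefXnM ltnn subnn.
  have e1 : A^`() - B^`() = 'X^(j.+1) * (q *+ j.+2 + 'X * q^`()).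
    by rewrite -derivB hq derivM derivXn /= mulrDr mulrnAr mulrnAl mulrA -exprSr.
  set Y := q *+ j.+2 + 'X * q^`() in e1.
  have e2 : vz j.+2 ('X^(j.+1) * (Y * (A^`() + B^`()))).
    have -> : 'X^(j.+1) * (Y * (A^`() + B^`())) =
      (A^`() ^+ 2 - Gm * (H \Po A)) - (B^`() ^+ 2 - Gm * (H \Po B))
      + Gm * ((H \Po A) - (H \Po B)).
      by rewrite mulrA -e1; ring.
    apply: vzD; last by apply: vzMl; apply: vz_comp; exists q.
    by apply: vzB; [apply: vzW ea | apply: vzW eb]; lia.
  move/vzP: e2 => /(_ j.+1 (ltnSn _)); rewrite coefXnM ltnn subnn coef0M.
  rewrite /Y (coefD (q *+ j.+2)) coefMn coefXM /= addr0 coefD !coef_deriv /= cA cB.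
  have -> : (1 < mu)%N by lia.
  rewrite a1 b1 -mulr_natr => /eqP; rewrite !mulf_eq0 => /orP [/orP [/eqP //|]|].
    by rewrite (negbTE (natr_neq0 hp _ _)) //; lia.
  by rewrite -mulr2n -mulr_natr mulf_eq0 (negbTE bn0) (negbTE two_neq0).
Qed.

Lemma final_ok :
  let out := newton_output mu alpha beta H G in
  vz mu.-1 (EE out) /\ out`_0 = alpha /\ out`_1 = beta.
Proof.
have [hI hd] := loop_ok (fuel := mu) init_ok (leq_trans (leq_pred _) (leq_addl _ _)).
rewrite /newton_output; move: hI hd.
case: (nloop mu H G mu (ninit alpha beta H G)) => d U J V S0 [_ _ eE eS] /= hd.
rewrite (_ : minn d mu.-1 = mu.-1) in eE; last by lia.
move/vzP: eS => eS; split => //; split.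
  by move: (eS 0%N isT); rewrite coefB coefD coefC coefZ coefX mulr0 addr0 => /subr0_eq.
by move: (eS 1%N isT); rewrite coefB coefD coefC coefZ coefX mulr1 add0r => /subr0_eq.
Qed.

End Main.

Unset Implicit Arguments.

Theorem proposition3p1 (K : finFieldType) (p : nat) (alpha beta : K)
    (G : series K) (H : {poly K}) (mu : nat) :
  p \in [pchar K] -> (3 < p)%N ->
  H.[alpha] = 1 -> beta ^+ 2 = G 0%N -> G 0%N != 0 ->
  (1 <= mu <= p)%N ->
  (exists S : series K, is_solution_mod mu alpha beta H G S) /\
  (forall S : series K, is_solution_mod mu alpha beta H G S ->
     take_poly mu (newton_output mu alpha beta H G) = trunc_series mu S).
Proof.
move=> hp p3 Ha hb hG0 /andP [hmu1 hmup].
have [eE [o0 o1]] := final_ok hp p3 Ha hb hG0 hmu1 hmup.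
move: eE o0 o1; set out := newton_output mu alpha beta H G => eE o0 o1.
have sol : is_solution_mod mu alpha beta H G (fun i => out`_i).
  split => //; apply/vz_take.
  have -> : trunc_series mu (fun i => out`_i) = take_poly mu out by [].
  set T := take_poly mu out.
  have tT : vz mu (T - out) by apply: vz_takeB.
  have -> : T^`() ^+ 2 - trunc_series mu G * (H \Po T) =
     (T^`() - out^`()) * (T^`() + out^`())
     - trunc_series mu G * ((H \Po T) - (H \Po out)) - EE mu G H out.
    by rewrite /EE; ring.
  apply: vzB => //; apply: vzB.
    by apply: vzMr; rewrite -derivB; apply: vz_deriv; rewrite prednK.
  apply: vzMl; apply: vzW (vz_comp H tT); exact: leq_pred.
split; first by exists (fun i => out`_i).
move=> S hS; rewrite -(uniq_sol hp p3 hb hG0 hmu1 hmup sol hS).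
by [].
Qed.
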